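(* Every cohesive almost zero-dimensional subspace of $\mathfrak C\times\mathbb R$ is nowhere dense in $\mathfrak C\times\mathbb R$.
   Context: $\mathfrak C$ denotes the middle-third Cantor set in $[0,1]$. A subset $A$ of a space $X$ is a C-set in $X$ if $A$ is an intersection of clopen subsets of $X$. A space $X$ is almost zero-dimensional if every point of $X$ has a neighborhood basis consisting of C-sets in $X$. A space $X$ is cohesive if every point $x\in X$ has a neighborhood which contains no non-empty clopen subset of $X$. *)

(* Defs.v *)
From Stdlib Require Import Reals.
Open Scope R_scope.

Definition pt := (R * R)%type.
Definition subset (A B : pt -> Prop) : Prop := forall p, A p -> B p.

Definition cantor (x : R) : Prop :=
  exists a : nat -> bool,
    infinite_sum (fun n => (if a n then 2 else 0) / 3 ^ (n + 1)) x.

Definition CxR (p : pt) : Prop := cantor (fst p).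

Definition open2 (U : pt -> Prop) : Prop :=
  forall p, U p -> exists eps, 0 < eps /\
    forall q, Rabs (fst q - fst p) < eps -> Rabs (snd q - snd p) < eps -> U q.

Definition open_in (S A : pt -> Prop) : Prop :=
  subset A S /\ exists U, open2 U /\ forall p, A p <-> (S p /\ U p).

Definition closed_in (S A : pt -> Prop) : Prop :=
  subset A S /\ open_in S (fun p => S p /\ ~ A p).

Definition clopen_in (S A : pt -> Prop) : Prop := open_in S A /\ closed_in S A.

Definition closure_in (S A : pt -> Prop) : pt -> Prop :=
  fun p => S p /\ forall F, closed_in S F -> subset (fun q => S q /\ A q) F -> F p.

Definition interior_in (S A : pt -> Prop) : pt -> Prop :=
  fun p => exists O, open_in S O /\ subset O A /\ O p.

Definition nowhere_dense_in (S A : pt -> Prop) : Prop :=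
  forall p, ~ interior_in S (closure_in S A) p.

Definition nbhd_in (S N : pt -> Prop) (x : pt) : Prop :=
  S x /\ subset N S /\ exists O, open_in S O /\ O x /\ subset O N.

(* C-set in S: an intersection of clopen subsets of S
   (the empty intersection being S itself). *)
Definition C_set_in (S A : pt -> Prop) : Prop :=
  subset A S /\ exists F : (pt -> Prop) -> Prop,
    (forall B, F B -> clopen_in S B) /\
    forall p, S p -> (A p <-> forall B, F B -> B p).

Definition almost_zero_dimensional (S : pt -> Prop) : Prop :=
  forall x U, nbhd_in S U x ->
    exists A, C_set_in S A /\ nbhd_in S A x /\ subset A U.

Definition cohesive (S : pt -> Prop) : Prop :=
  forall x, S x -> exists N, nbhd_in S N x /\
    forall B, clopen_in S B -> subset B N -> ~ (exists p, B p).

(* Main.v *)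
Require Import Defs.
From Stdlib Require Import Reals.
From Stdlib Require Import Lra Lia ZArith Classical.
Open Scope R_scope.

Definition dig (d : nat -> bool) (n : nat) : R := (if d n then 2 else 0) / 3 ^ (n + 1).
Fixpoint ps (d : nat -> bool) (k : nat) : R :=
  match k with O => 0 | S k => ps d k + dig d k end.

Lemma sum_ps d : forall N, sum_f_R0 (dig d) N = ps d (S N).
Proof. induction N; simpl. ring. rewrite IHN. simpl. ring. Qed.

Lemma ps_int d : forall k, exists z, 3^k * ps d k = IZR z.
Proof.
  induction k as [|k [z Hz]].
  - exists 0%Z. simpl. ring.
  - exists (3*z + (if d k then 2 else 0))%Z.
    change (ps d (S k)) with (ps d k + dig d k).
    unfold dig. rewrite plus_IZR, mult_IZR, <- Hz, pow_add.
    change (3 ^ S k) with (3 * 3 ^ k).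
    assert (3 ^ k <> 0) by (apply pow_nonzero; lra).
    destruct (d k); simpl; field; auto.
Qed.

Lemma step_eq d k j :
  3^k * (ps d (S k + j) - ps d k) =
  (3^(S k) * (ps d (S k + j) - ps d (S k)))/3 + (if d k then 2 else 0)/3.
Proof.
  change (ps d (S k)) with (ps d k + dig d k). unfold dig.
  change (3 ^ S k) with (3 * 3 ^ k). rewrite pow_add.
  assert (3 ^ k <> 0) by (apply pow_nonzero; lra).
  simpl (3 ^ 1). field. auto.
Qed.

Lemma ps_tail d : forall j k, 0 <= 3^k*(ps d (k+j) - ps d k) <= 1.
Proof.
  induction j; intros k.
  - rewrite Nat.add_0_r. lra.
  - replace (k + S j)%nat with (S k + j)%nat by lia.
    rewrite step_eq. specialize (IHj (S k)).
    destruct (d k); lra.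
Qed.

Lemma tail_digit d k j :
  (d k = false -> 0 <= 3^k*(ps d (k + S j) - ps d k) <= 1/3) /\
  (d k = true -> 2/3 <= 3^k*(ps d (k + S j) - ps d k) <= 1).
Proof.
  replace (k + S j)%nat with (S k + j)%nat by lia.
  rewrite step_eq. pose proof (ps_tail d j (S k)).
  split; intros E; rewrite E; lra.
Qed.

Lemma lim_bounds u l a b k : Un_cv u l -> (forall n, (n >= k)%nat -> a <= u n <= b) -> a <= l <= b.
Proof.
  intros Hu Hb. split; apply Rnot_lt_le; intro H.
  - destruct (Hu (a - l)) as [N HN]; [lra|].
    specialize (HN (max N k) (Nat.le_max_l _ _)). specialize (Hb (max N k) (Nat.le_max_r _ _)).
    unfold R_dist in HN. apply Rabs_def2 in HN. lra.
  - destruct (Hu (l - b)) as [N HN]; [lra|].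
    specialize (HN (max N k) (Nat.le_max_l _ _)). specialize (Hb (max N k) (Nat.le_max_r _ _)).
    unfold R_dist in HN. apply Rabs_def2 in HN. lra.
Qed.

Lemma cv_affine u l P q : 0 < P -> Un_cv u l -> Un_cv (fun n => P * (u n - q)) (P * (l - q)).
Proof.
  intros HP Hu eps He. destruct (Hu (eps / P)) as [N HN].
  { apply Rdiv_lt_0_compat; lra. }
  exists N. intros n Hn. specialize (HN n Hn). unfold R_dist in *.
  replace (P * (u n - q) - P * (l - q)) with (P * (u n - l)) by ring.
  rewrite Rabs_mult, (Rabs_right P) by lra.
  apply Rmult_lt_compat_l with (r := P) in HN; [|lra].
  replace (P * (eps / P)) with eps in HN by (field; lra). exact HN.
Qed.

Lemma cantor_digit x d k :
  infinite_sum (dig d) x ->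
  exists z, 0 <= 3^k * x - IZR z <= 1 /\
     (d k = false -> 3^k * x - IZR z <= 1/3) /\ (d k = true -> 2/3 <= 3^k * x - IZR z).
Proof.
  intros Hs. destruct (ps_int d k) as [z Hz]. exists z.
  assert (HP : 0 < 3^k) by (apply pow_lt; lra).
  assert (Hcv : Un_cv (fun n => 3^k * (sum_f_R0 (dig d) n - ps d k)) (3^k * (x - ps d k))).
  { apply cv_affine; auto. }
  replace (3^k * x - IZR z) with (3^k * (x - ps d k)) by (rewrite <- Hz; ring).
  assert (Hall : forall n, (n >= k)%nat ->
     3^k * (sum_f_R0 (dig d) n - ps d k) = 3^k*(ps d (k + S (n - k)) - ps d k)).
  { intros n Hn. rewrite sum_ps. do 3 f_equal. lia. }
  destruct (d k) eqn:E.
  - assert (H := lim_bounds _ _ (2/3) 1 k Hcv).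
    destruct H as [H1 H2].
    { intros n Hn. rewrite Hall by auto. apply (tail_digit d k (n - k)). auto. }
    split; [lra|]. split; intros; [discriminate|lra].
  - assert (H := lim_bounds _ _ 0 (1/3) k Hcv).
    destruct H as [H1 H2].
    { intros n Hn. rewrite Hall by auto. apply (tail_digit d k (n - k)). auto. }
    split; [lra|]. split; intros; [lra|discriminate].
Qed.

Lemma noncantor k z x : 3^k * x = IZR z + /2 -> ~ cantor x.
Proof.
  intros Hx [d Hd]. destruct (cantor_digit x d k Hd) as [z' [Hb [Hf Ht]]].
  assert (Hw : IZR (z - z') = 3^k * x - IZR z' - /2) by (rewrite minus_IZR; lra).
  destruct (d k).
  - specialize (Ht eq_refl).
    assert (A1 : IZR 0 < IZR (z - z')) by (simpl; lra).
    assert (A2 : IZR (z - z') < IZR 1) by (simpl; lra).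
    apply lt_IZR in A1. apply lt_IZR in A2. lia.
  - specialize (Hf eq_refl).
    assert (A1 : IZR (-1) < IZR (z - z')) by (simpl; lra).
    assert (A2 : IZR (z - z') < IZR 0) by (simpl; lra).
    apply lt_IZR in A1. apply lt_IZR in A2. lia.
Qed.

Lemma div_lt_aux a b P : 0 < P -> a < b * P -> a / P < b.
Proof.
  intros HP H. apply (Rmult_lt_reg_r P); auto.
  unfold Rdiv. rewrite Rmult_assoc, Rinv_l by lra. lra.
Qed.

Lemma cantor_gaps c g : cantor c -> 0 < g ->
  exists u v, ~ cantor u /\ ~ cantor v /\ c - g < u < c /\ c < v < c + g.
Proof.
  intros Hc Hg. pose proof Hc as [d Hd].
  destruct (Pow_x_infinity 3) with (b := 2 / g + 1) as [k Hk].
  { rewrite Rabs_right; lra. }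
  specialize (Hk k (le_n k)). rewrite Rabs_right in Hk by (left; apply pow_lt; lra).
  set (P := 3 ^ k) in *.
  assert (HP : 0 < P) by (apply pow_lt; lra).
  assert (HgP : 2 < g * P).
  { assert (g * (2 / g) = 2) by (field; lra).
    assert (g * (2/g) < g * P) by (apply Rmult_lt_compat_l; lra). lra. }
  destruct (cantor_digit c d k Hd) as [z [Hb _]]. fold P in Hb.
  set (T := P * c - IZR z) in *.
  exists (c - (T + /2) / P), (c + (3/2 - T) / P).
  assert (Q1 : 0 < (T + /2) / P) by (apply Rdiv_lt_0_compat; lra).
  assert (Q2 : 0 < (3/2 - T) / P) by (apply Rdiv_lt_0_compat; lra).
  assert (Q3 : (T + /2) / P < g) by (apply div_lt_aux; lra).
  assert (Q4 : (3/2 - T) / P < g) by (apply div_lt_aux; lra).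
  split; [|split; [|lra]].
  - apply (noncantor k (z - 1)). fold P. rewrite minus_IZR. unfold T. field. lra.
  - apply (noncantor k (z + 1)). fold P. rewrite plus_IZR. unfold T. field. lra.
Qed.

Lemma abs_lt x e : Rabs x < e <-> - e < x < e.
Proof. split; intro H. apply Rabs_def2 in H; lra. apply Rabs_def1; lra. Qed.

Definition bx (a b e : R) (q : pt) : Prop := Rabs (fst q - a) < e /\ Rabs (snd q - b) < e.

Lemma bx_open a b e : open2 (bx a b e).
Proof.
  intros p [H1 H2].
  exists (Rmin (e - Rabs (fst p - a)) (e - Rabs (snd p - b))).
  pose proof (Rmin_l (e - Rabs (fst p - a)) (e - Rabs (snd p - b))).
  pose proof (Rmin_r (e - Rabs (fst p - a)) (e - Rabs (snd p - b))).
  split.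
  - apply Rmin_glb_lt; lra.
  - intros q Hq1 Hq2. unfold bx.
    pose proof (Rabs_triang (fst q - fst p) (fst p - a)).
    pose proof (Rabs_triang (snd q - snd p) (snd p - b)).
    replace (fst q - a) with ((fst q - fst p) + (fst p - a)) by ring.
    replace (snd q - b) with ((snd q - snd p) + (snd p - b)) by ring.
    split; lra.
Qed.

Lemma open_and U V : open2 U -> open2 V -> open2 (fun q => U q /\ V q).
Proof.
  intros HU HV p [Hu Hv]. destruct (HU p Hu) as [e1 [He1 H1]]. destruct (HV p Hv) as [e2 [He2 H2]].
  exists (Rmin e1 e2). pose proof (Rmin_l e1 e2). pose proof (Rmin_r e1 e2).
  split. apply Rmin_glb_lt; auto.
  intros q Hq1 Hq2. split; [apply H1|apply H2]; lra.
Qed.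

Lemma open_or U V : open2 U -> open2 V -> open2 (fun q => U q \/ V q).
Proof.
  intros HU HV p [Hu|Hv].
  - destruct (HU p Hu) as [e1 [He1 H1]]. exists e1. split; auto.
  - destruct (HV p Hv) as [e1 [He1 H1]]. exists e1. split; auto.
Qed.

Lemma open_fst_lt u : open2 (fun q => fst q < u).
Proof.
  intros p Hp. exists (u - fst p). split; [lra|]. intros q H1 _. apply Rabs_def2 in H1. lra.
Qed.
Lemma open_fst_gt u : open2 (fun q => u < fst q).
Proof.
  intros p Hp. exists (fst p - u). split; [lra|]. intros q H1 _. apply Rabs_def2 in H1. lra.
Qed.
Lemma open_snd_lt u : open2 (fun q => snd q < u).
Proof.
  intros p Hp. exists (u - snd p). split; [lra|]. intros q _ H1. apply Rabs_def2 in H1. lra.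
Qed.
Lemma open_snd_gt u : open2 (fun q => u < snd q).
Proof.
  intros p Hp. exists (snd p - u). split; [lra|]. intros q _ H1. apply Rabs_def2 in H1. lra.
Qed.

Ltac unabs := repeat match goal with
  | H : Rabs _ < _ |- _ => apply abs_lt in H
  | |- Rabs _ < _ => apply abs_lt
  end.

Lemma density (X : pt -> Prop) q :
  closure_in CxR X q -> forall e, 0 < e -> exists x, X x /\ Rabs (fst x - fst q) < e /\ Rabs (snd x - snd q) < e.
Proof.
  intros [Hq Hcl] e He. apply NNPP. intro Hno.
  set (F := fun z => CxR z /\ ~ bx (fst q) (snd q) e z).
  assert (HF : closed_in CxR F).
  { split. intros z [Hz _]; auto.
    split. intros z [Hz _]; auto.
    exists (bx (fst q) (snd q) e). split. apply bx_open.
    intros z. unfold F. split.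
    - intros [Hz Hn]. split; auto. apply NNPP. intro. apply Hn. split; auto.
    - intros [Hz Hb]. split; auto. intros [_ Hn]. auto. }
  assert (Hs : subset (fun z => CxR z /\ X z) F).
  { intros z [Hz Hx]. split; auto. intros [H1 H2]. apply Hno. exists z. auto. }
  destruct (Hcl F HF Hs) as [_ Hn]. apply Hn. unfold bx.
  rewrite !Rminus_diag, Rabs_R0. auto.
Qed.

Theorem theorem3p3 (X : pt -> Prop) :
  subset X CxR -> cohesive X -> almost_zero_dimensional X ->
  nowhere_dense_in CxR X.
Proof.
  intros HX Hcoh Hazd p [O [[HOsub [U [HU HOU]]] [HOcl HOp]]].
  destruct (proj1 (HOU p) HOp) as [Hp HUp].
  destruct (HU p HUp) as [eps [Heps Hbox]].
  assert (Dens : forall q, CxR q -> Rabs (fst q - fst p) < eps -> Rabs (snd q - snd p) < eps ->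
     forall e, 0 < e -> exists x, X x /\ Rabs (fst x - fst q) < e /\ Rabs (snd x - snd q) < e).
  { intros q Hq H1 H2. apply density. apply HOcl. apply HOU. split; auto. }
  destruct (Dens p Hp ltac:(rewrite Rminus_diag, Rabs_R0; lra) ltac:(rewrite Rminus_diag, Rabs_R0; lra) (eps/2))
    as [x0 [Hx0 [Hx01 Hx02]]]; [lra|].
  destruct (Hcoh x0 Hx0) as [N [[_ [HNsub [O1 [[_ [U1 [HU1 HO1]]] [HO1x HO1N]]]]] Hno]].
  destruct (proj1 (HO1 x0) HO1x) as [_ HU1x].
  destruct (HU1 x0 HU1x) as [r1 [Hr1 Hbox1]].
  set (r := Rmin r1 (eps/2)).
  assert (Hr : 0 < r) by (apply Rmin_glb_lt; lra).
  assert (Hrr1 : r <= r1) by apply Rmin_l.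
  assert (Hre : r <= eps/2) by apply Rmin_r.
  assert (BoxN : forall z, X z -> Rabs (fst z - fst x0) < r -> Rabs (snd z - snd x0) < r -> N z).
  { intros z Hz H1 H2. apply HO1N. apply HO1. split; auto. apply Hbox1; lra. }
  set (Ub := fun z => X z /\ bx (fst x0) (snd x0) (r/2) z).
  assert (HUb : nbhd_in X Ub x0).
  { split; auto. split. intros z [Hz _]; auto.
    exists Ub. split; [|split].
    - split. intros z [Hz _]; auto. exists (bx (fst x0) (snd x0) (r/2)). split. apply bx_open.
      intros z; unfold Ub; tauto.
    - split; auto. unfold bx. rewrite !Rminus_diag, Rabs_R0. lra.
    - intros z H; auto. }
  destruct (Hazd x0 Ub HUb) as [A [[HAsub [F [HFcl HFA]]] [[_ [_ [O2 [[_ [U2 [HU2 HO2]]] [HO2x HO2A]]]]] HAU]]].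
  destruct (proj1 (HO2 x0) HO2x) as [_ HU2x].
  destruct (HU2 x0 HU2x) as [dl [Hdl Hbox2]].
  set (d := Rmin dl (r/2)).
  assert (Hd : 0 < d) by (apply Rmin_glb_lt; lra).
  assert (Hddl : d <= dl) by apply Rmin_l.
  assert (Hdr : d <= r/2) by apply Rmin_r.
  assert (WA : forall z, X z -> Rabs (fst z - fst x0) < d -> Rabs (snd z - snd x0) < d ->
     forall B, F B -> B z).
  { intros z Hz H1 H2. apply (HFA z Hz). apply HO2A. apply HO2. split; auto. apply Hbox2; lra. }
  assert (NotA : forall z, X z -> r/2 <= Rabs (snd z - snd x0) -> exists B, F B /\ ~ B z).
  { intros z Hz H. apply NNPP. intro Hn.
    assert (A z). { apply (HFA z Hz). intros B HB. apply NNPP. intro. apply Hn. exists B. auto. }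
    destruct (HAU z H0) as [_ [_ H3]]. lra. }
  set (rho := Rmin (d/4) (r/8)).
  assert (Hrho : 0 < rho) by (apply Rmin_glb_lt; lra).
  assert (Hrd : rho <= d/4) by apply Rmin_l.
  assert (Hrr : rho <= r/8) by apply Rmin_r.
  destruct (Dens (fst x0, snd x0 + 3*r/4) (HX x0 Hx0)) with (e := rho) as [y [Hy [Hy1 Hy2]]];
    simpl; auto.
  { unabs; lra. }
  { unabs; lra. }
  simpl in Hy1, Hy2.
  destruct (NotA y Hy) as [B1 [HB1 HnB1]].
  { apply Rnot_lt_le. intro H. unabs. lra. }
  destruct (HFcl B1 HB1) as [[_ [Ub1 [HUb1 HEb1]]] [_ [_ [Vb1 [HVb1 HEv1]]]]].
  destruct (proj1 (HEv1 y) (conj Hy HnB1)) as [_ HVy].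
  destruct (HVb1 y HVy) as [g1 [Hg1 Hbg1]].
  assert (Cut1 : forall z, X z -> Rabs (fst z - fst y) < g1 -> Rabs (snd z - snd y) < g1 -> ~ B1 z).
  { intros z Hz H1 H2. assert (X z /\ Vb1 z) by auto. apply HEv1 in H. tauto. }
  set (rho' := Rmin rho (g1/2)).
  assert (Hrho' : 0 < rho') by (apply Rmin_glb_lt; lra).
  assert (Hrr' : rho' <= rho) by apply Rmin_l.
  assert (Hrg' : rho' <= g1/2) by apply Rmin_r.
  destruct (Dens (fst y, snd x0 - 3*r/4) (HX y Hy)) with (e := rho') as [y' [Hy' [Hy'1 Hy'2]]];
    simpl; auto.
  { unabs; lra. }
  { unabs; lra. }
  simpl in Hy'1, Hy'2.
  destruct (NotA y' Hy') as [B2 [HB2 HnB2]].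
  { apply Rnot_lt_le. intro H. unabs. lra. }
  destruct (HFcl B2 HB2) as [[_ [Ub2 [HUb2 HEb2]]] [_ [_ [Vb2 [HVb2 HEv2]]]]].
  destruct (proj1 (HEv2 y') (conj Hy' HnB2)) as [_ HVy'].
  destruct (HVb2 y' HVy') as [g2 [Hg2 Hbg2]].
  assert (Cut2 : forall z, X z -> Rabs (fst z - fst y') < g2 -> Rabs (snd z - snd y') < g2 -> ~ B2 z).
  { intros z Hz H1 H2. assert (X z /\ Vb2 z) by auto. apply HEv2 in H. tauto. }
  set (g := Rmin (Rmin g2 (g1/2)) rho).
  assert (Hg : 0 < g) by (repeat apply Rmin_glb_lt; lra).
  assert (Hgg2 : g <= g2) by (unfold g; eapply Rle_trans; [apply Rmin_l|apply Rmin_l]).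
  assert (Hgg1 : g <= g1/2) by (unfold g; eapply Rle_trans; [apply Rmin_l|apply Rmin_r]).
  assert (Hgr : g <= rho) by apply Rmin_r.
  destruct (cantor_gaps (fst y') g (HX y' Hy') Hg) as [u [v [Hu [Hv [Huu Hvv]]]]].
  set (BB := fun z => X z /\ B1 z /\ B2 z /\ (u < fst z < v) /\ (snd y' < snd z < snd y)).
  apply (Hno BB).
  - split.
    + split. intros z [Hz _]; auto.
      exists (fun z => Ub1 z /\ Ub2 z /\ (u < fst z < v) /\ (snd y' < snd z < snd y)).
      split.
      { repeat apply open_and; auto using open_fst_lt, open_fst_gt, open_snd_lt, open_snd_gt. }
      intros z. unfold BB. rewrite (HEb1 z), (HEb2 z). tauto.
    + split. intros z [Hz _]; auto.
      split. intros z [Hz _]; auto.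
      exists (fun z => Vb1 z \/ Vb2 z \/ fst z < u \/ v < fst z \/ snd z < snd y' \/ snd y < snd z).
      split.
      { repeat apply open_or; auto using open_fst_lt, open_fst_gt, open_snd_lt, open_snd_gt. }
      intros z. split.
      * intros [Hz HnB]. split; auto.
        destruct (classic (B1 z)) as [Hb1|Hb1].
        2:{ left. apply (HEv1 z). auto. }
        destruct (classic (B2 z)) as [Hb2|Hb2].
        2:{ right; left. apply (HEv2 z). auto. }
        assert (Hcz : cantor (fst z)) by exact (HX z Hz).
        destruct (Rtotal_order (fst z) u) as [H1|[H1|H1]].
        { do 2 right; left; auto. }
        { rewrite H1 in Hcz. contradiction. }
        destruct (Rtotal_order (fst z) v) as [H2|[H2|H2]].
        2:{ rewrite H2 in Hcz. contradiction. }
        2:{ do 3 right; left; auto. }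
        destruct (Rtotal_order (snd z) (snd y')) as [H3|[H3|H3]].
        { do 4 right; left; auto. }
        { exfalso. apply (Cut2 z Hz); auto. unabs; lra. rewrite H3, Rminus_diag, Rabs_R0; lra. }
        destruct (Rtotal_order (snd z) (snd y)) as [H4|[H4|H4]].
        { exfalso. apply HnB. unfold BB. tauto. }
        { exfalso. apply (Cut1 z Hz); auto. unabs; lra. rewrite H4, Rminus_diag, Rabs_R0; lra. }
        { do 5 right; auto. }
      * intros [Hz HV]. split; auto. intros [_ [Hb1 [Hb2 [H1 H2]]]].
        destruct HV as [HV|[HV|[HV|[HV|[HV|HV]]]]]; try lra.
        { apply (proj2 (HEv1 z) (conj Hz HV)). auto. }
        { apply (proj2 (HEv2 z) (conj Hz HV)). auto. }
  - intros z [Hz [_ [_ [H1 H2]]]]. apply BoxN; auto; unabs; lra.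
  - destruct (Dens (fst y', snd x0) (HX y' Hy')) with
      (e := Rmin (Rmin (fst y' - u) (v - fst y')) (d/4)) as [z [Hz [Hz1 Hz2]]].
    { simpl. unabs; lra. }
    { simpl. lra. }
    { repeat apply Rmin_glb_lt; lra. }
    simpl in Hz1, Hz2.
    pose proof (Rmin_l (Rmin (fst y' - u) (v - fst y')) (d/4)).
    pose proof (Rmin_r (Rmin (fst y' - u) (v - fst y')) (d/4)).
    pose proof (Rmin_l (fst y' - u) (v - fst y')).
    pose proof (Rmin_r (fst y' - u) (v - fst y')).
    exists z. assert (HW : forall B, F B -> B z).
    { apply WA; auto; unabs; lra. }
    unfold BB. split; auto. split; [apply HW; auto|]. split; [apply HW; auto|].
    unabs. split; lra.
Qed.
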